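(* Let $L$ be an interval locale with top element $1$, and for a presheaf $F$ on $L$ and $x\in L\setminus\{1\}$ set $F_x=\varinjlim_{x<s}F(s)$. Then: (1) the associated sheaf map $\eta:F\to L^2F$ induces bijections $F_x\to(L^2F)_x$ for all $x\in L\setminus\{1\}$; (2) a map $E\to F$ of presheaves on $L$ induces bijections $E_x\to F_x$ for all $x\in L\setminus\{1\}$ if and only if the induced map $L^2E\to L^2F$ of associated sheaves is an isomorphism.
   Context: A locale $L$ is a complete lattice in which finite meets distribute over arbitrary joins, with Grothendieck topology: $\{b_j\le a\}$ covers $a$ iff $\bigvee_j b_j=a$; presheaves are functors $L^{op}\to\mathbf{Set}$, sheaves are presheaves $F$ with $F(a)\to\varprojlim_{b\in R}F(b)$ bijective for all covering sieves $R$ of $a$. $L$ is an interval if it is totally ordered and densely ordered ($a<b$ implies some $s$ with $a<s<b$). $L^2$ denotes the associated sheaf functor from presheaves to sheaves on $L$ and $\eta:F\to L^2F$ the canonical map. *)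

(* Defs.v *)
From Stdlib Require Import Relation_Operators.

Unset Implicit Arguments.


Record Locale := {
  lcar :> Type;
  le : lcar -> lcar -> Prop;
  le_refl : forall a, le a a;
  le_trans : forall a b c, le a b -> le b c -> le a c;
  le_antisym : forall a b, le a b -> le b a -> a = b;
  sup : (lcar -> Prop) -> lcar;
  sup_ub : forall (S : lcar -> Prop) s, S s -> le s (sup S);
  sup_least : forall (S : lcar -> Prop) u, (forall s, S s -> le s u) -> le (sup S) u;
  meet : lcar -> lcar -> lcar;
  meet_l : forall a b, le (meet a b) a;
  meet_r : forall a b, le (meet a b) b;
  meet_glb : forall a b c, le c a -> le c b -> le c (meet a b);
  meet_sup_distr : forall a (S : lcar -> Prop),
    meet a (sup S) = sup (fun c => exists s, S s /\ c = meet a s)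
}.

Arguments le {L} : rename.
Arguments sup {L} : rename.
Arguments meet {L} : rename.

Definition ltop (L : Locale) : L := sup (fun _ : L => True).

Definition lt {L : Locale} (a b : L) : Prop := le a b /\ a <> b.

Definition is_interval (L : Locale) : Prop :=
  (forall a b : L, le a b \/ le b a) /\
  (forall a b : L, lt a b -> exists s, lt a s /\ lt s b).

Record Presheaf (L : Locale) := {
  sec :> L -> Type;
  res : forall a b : L, le a b -> sec b -> sec a;
  res_id : forall a (h : le a a) x, res a a h x = x;
  res_comp : forall a b c (h1 : le a b) (h2 : le b c) (h3 : le a c) x,
    res a b h1 (res b c h2 x) = res a c h3 x
}.
Arguments res {L} p {a b} h x.
Arguments sec {L} p _.

Record PMap (L : Locale) (F G : Presheaf L) := {
  pmap :> forall a : L, F a -> G a;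
  pmap_nat : forall (a b : L) (h : le a b) (x : F b),
    pmap a (res F h x) = res G h (pmap b x)
}.
Arguments pmap {L F G} p a _.
Arguments PMap {L} F G.

(* Sheaf condition: for every covering sieve R of a (sieve on a with
   sup R = a), the canonical map F(a) -> lim_{b in R} F(b) is bijective;
   elements of the limit are compatible families (compared pointwise). *)
Definition is_sheaf {L : Locale} (F : Presheaf L) : Prop :=
  forall (a : L) (R : L -> Prop) (hR : forall b, R b -> le b a),
    (forall b c, R b -> le c b -> R c) ->
    sup R = a ->
    (forall s t : F a,
        (forall b (hb : R b), res F (hR b hb) s = res F (hR b hb) t) -> s = t) /\
    (forall fam : forall b, R b -> F b,
        (forall b c (hb : R b) (hc : R c) (h : le c b),
            res F h (fam b hb) = fam c hc) ->
        exists s : F a, forall b (hb : R b), res F (hR b hb) s = fam b hb).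

Definition is_sheafification {L : Locale} {F G : Presheaf L} (eta : PMap F G) : Prop :=
  is_sheaf G /\
  forall (H : Presheaf L) (phi : PMap F H), is_sheaf H ->
    exists psi : PMap G H,
      (forall a x, psi a (eta a x) = phi a x) /\
      (forall psi' : PMap G H, (forall a x, psi' a (eta a x) = phi a x) ->
         forall a y, psi' a y = psi a y).

Definition is_iso {L : Locale} {F G : Presheaf L} (f : PMap F G) : Prop :=
  exists g : PMap G F,
    (forall a x, g a (f a x) = x) /\ (forall a y, f a (g a y) = y).

(* Stalk F_x = colim_{x < s} F(s): germs (s, u) with x < s and u in F(s),
   modulo the equivalence relation generated by (s,u) ~ (r, u|_r). *)
Record Germ {L : Locale} (F : Presheaf L) (x : L) := mkGerm {
  g_s : L;
  g_lt : lt x g_s;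
  g_v : F g_s
}.
Arguments g_s {L F x} g.
Arguments g_lt {L F x} g.
Arguments g_v {L F x} g.
Arguments mkGerm {L F x} g_s g_lt g_v.

Definition germ_step {L : Locale} {F : Presheaf L} {x : L} (g1 g2 : Germ F x) : Prop :=
  exists h : le (g_s g2) (g_s g1), g_v g2 = res F h (g_v g1).

Definition germ_eq {L : Locale} {F : Presheaf L} {x : L} : Germ F x -> Germ F x -> Prop :=
  clos_refl_sym_trans (Germ F x) germ_step.

Definition germ_map {L : Locale} {E F : Presheaf L} (f : PMap E F) (x : L)
  (g : Germ E x) : Germ F x :=
  mkGerm (g_s g) (g_lt g) (f (g_s g) (g_v g)).

Definition stalk_bij {L : Locale} {E F : Presheaf L} (f : PMap E F) (x : L) : Prop :=
  (forall g1 g2 : Germ E x, germ_eq (germ_map f x g1) (germ_map f x g2) -> germ_eq g1 g2) /\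
  (forall h : Germ F x, exists g : Germ E x, germ_eq h (germ_map f x g)).

(* Main.v *)
Require Import Defs.
From Stdlib Require Import Relation_Operators Classical ClassicalEpsilon FunctionalExtensionality PropExtensionality ProofIrrelevance.

Lemma res_pi (L : Locale) (F : Presheaf L) a b (h1 h2 : le a b) x :
  res F h1 x = res F h2 x.
Proof. rewrite (proof_irrelevance _ h1 h2); reflexivity. Qed.

Lemma not_lt_le (L : Locale) (HL : is_interval L) (x b : L) : ~ lt x b -> le b x.
Proof.
  intro H. destruct (proj1 HL x b) as [h|h]; auto.
  destruct (classic (x = b)) as [e|e]. subst; apply le_refl.
  exfalso; apply H; split; auto.
Qed.

Lemma lt_trans_le (L : Locale) (a b c : L) : lt a b -> le b c -> lt a c.
Proof.
  intros [h1 h2] h3. split. eapply le_trans; eauto.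
  intro e; subst. apply h2. apply le_antisym; auto.
Qed.

Lemma cprime (L : Locale) (HL : is_interval L) (x : L) (R : L -> Prop) :
  lt x (sup R) -> exists b, R b /\ lt x b.
Proof.
  intro H. apply NNPP; intro N.
  assert (le (sup R) x).
  { apply sup_least. intros s Hs. apply not_lt_le; auto. intro. apply N; eauto. }
  destruct H as [h1 h2]. apply h2. apply le_antisym; auto.
Qed.

Lemma le_top (L : Locale) (a : L) : le a (ltop L).
Proof. apply sup_ub. exact I. Qed.

Definition agree {L : Locale} {F : Presheaf L} {x : L} (g1 g2 : Germ F x) : Prop :=
  exists t (ht : lt x t) (h1 : le t (g_s g1)) (h2 : le t (g_s g2)),
    res F h1 (g_v g1) = res F h2 (g_v g2).

Lemma germ_eq_agree (L : Locale) (HL : is_interval L) (F : Presheaf L) (x : L)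
  (g1 g2 : Germ F x) : germ_eq g1 g2 -> agree g1 g2.
Proof.
  induction 1.
  - destruct H as [h e]. destruct x0 as [s1 l1 v1], y as [s2 l2 v2]; simpl in *.
    exists s2, l2, h, (le_refl _ _). rewrite e, res_id. reflexivity.
  - destruct x0 as [s1 l1 v1]. exists s1, l1, (le_refl _ _), (le_refl _ _). reflexivity.
  - destruct IHclos_refl_sym_trans as (t & ht & h1 & h2 & e).
    exists t, ht, h2, h1. auto.
  - destruct IHclos_refl_sym_trans1 as (t & ht & h1 & h2 & e).
    destruct IHclos_refl_sym_trans2 as (t' & ht' & h1' & h2' & e').
    destruct (proj1 HL t t') as [k|k].
    + exists t, ht, h1, (le_trans _ _ _ _ k h2').
      rewrite e. rewrite <- (res_comp L F t t' (g_s y) k h1' h2), e'.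
      apply res_comp.
    + exists t', ht', (le_trans _ _ _ _ k h1), h2'.
      rewrite <- e'. rewrite <- (res_comp L F t' t (g_s x0) k h1), e.
      apply res_comp.
Qed.

Lemma germ_eq_map (L : Locale) (E F : Presheaf L) (f : PMap E F) x (g1 g2 : Germ E x) :
  germ_eq g1 g2 -> germ_eq (germ_map f x g1) (germ_map f x g2).
Proof.
  induction 1.
  - apply rst_step. destruct H as [h e]. exists h. simpl. rewrite e. apply pmap_nat.
  - apply rst_refl.
  - apply rst_sym; auto.
  - eapply rst_trans; eauto.
Qed.

Definition Sx (L : Locale) (x : L) : Presheaf L.
Proof.
  refine {| sec := fun a => lt x a -> Prop;
            res := fun a b h f => fun p => f (lt_trans_le L x a b p h) |}.
  - intros a h f. apply functional_extensionality. intro p.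
    f_equal. apply proof_irrelevance.
  - intros. apply functional_extensionality. intro p. f_equal. apply proof_irrelevance.
Defined.

Lemma Sx_sheaf (L : Locale) (HL : is_interval L) (x : L) : is_sheaf (Sx L x).
Proof.
  intros a R hR Rdown Rsup. split.
  - intros s t H. apply functional_extensionality. intro p.
    assert (lt x (sup R)) as p' by (rewrite Rsup; exact p).
    destruct (cprime L HL x R p') as [b [Rb xb]].
    specialize (H b Rb). simpl in H.
    assert (E := f_equal (fun f => f xb) H). simpl in E.
    rewrite (proof_irrelevance _ p (lt_trans_le L x b a xb (hR b Rb))). exact E.
  - intros fam Hc.
    assert (forall p : lt x a, {b : L | R b /\ lt x b}) as pick.
    { intro p. apply constructive_indefinite_description.
      apply cprime; auto. rewrite Rsup; exact p. }
    exists (fun p => let (b, hb) := pick p in fam b (proj1 hb) (proj2 hb)).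
    intros c hc. apply functional_extensionality. intro q. simpl.
    destruct (pick _) as [b [Rb xb]].
    destruct (proj1 HL b c) as [k|k].
    + generalize (proj1 (conj Rb xb)) (proj2 (conj Rb xb)); intros r1 x1. rewrite <- (Hc c b hc r1 k). simpl. f_equal. apply proof_irrelevance. 
    + generalize (proj1 (conj Rb xb)) (proj2 (conj Rb xb)); intros r1 x1. rewrite <- (Hc b c r1 hc k). simpl. f_equal. apply proof_irrelevance.
Qed.

Definition gval {L : Locale} {G : Presheaf L} {x : L} (psi : PMap G (Sx L x))
  (g : Germ G x) : Prop := psi (g_s g) (g_v g) (g_lt g).

Lemma gval_eq (L : Locale) (G : Presheaf L) (x : L) (psi : PMap G (Sx L x))
  (g1 g2 : Germ G x) : germ_eq g1 g2 -> gval psi g1 = gval psi g2.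
Proof.
  induction 1; auto; try congruence.
  destruct H as [h e]. unfold gval. rewrite e, pmap_nat. simpl.
  f_equal. apply proof_irrelevance.
Qed.

Lemma part1 (L : Locale) (HL : is_interval L) (F G : Presheaf L) (eta : PMap F G) :
  is_sheafification eta -> forall x : L, stalk_bij eta x.
Proof.
  intros [Gsh U] x. split.
  - intros g1 g2 Heq.
    unshelve epose (phi := {| pmap := fun a (u : F a) => (fun p => germ_eq g1 (mkGerm a p u)) : Sx L x a |}).
    { intros a b h u. apply functional_extensionality. intro p. simpl.
      apply propositional_extensionality. split; intro H.
      - eapply rst_trans. exact H. apply rst_sym, rst_step. exists h. reflexivity.
      - eapply rst_trans. exact H. apply rst_step. exists h. reflexivity. }
    destruct (U (Sx L x) phi (Sx_sheaf L HL x)) as [psi [Hpsi _]].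
    pose proof (gval_eq L G x psi _ _ Heq) as E.
    destruct g1 as [s1 l1 v1], g2 as [s2 l2 v2].
    unfold gval in E; simpl in E. rewrite !Hpsi in E. simpl in E.
    rewrite <- E. apply rst_refl.
  - unshelve epose (phi := {| pmap := fun a (u : F a) => (fun p => True) : Sx L x a |}).
    { intros. reflexivity. }
    destruct (U (Sx L x) phi (Sx_sheaf L HL x)) as [psi0 [_ Hu]].
    unshelve epose (psi1 := {| pmap := fun a (v : G a) =>
       (fun p => exists g, germ_eq (mkGerm a p v) (germ_map eta x g)) : Sx L x a |}).
    { intros a b h v. apply functional_extensionality. intro p. simpl.
      apply propositional_extensionality. split; intros [g H]; exists g.
      - eapply rst_trans; [|exact H]. apply rst_step. exists h. reflexivity.
      - eapply rst_trans; [|exact H]. apply rst_sym, rst_step. exists h. reflexivity. }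
    unshelve epose (psi2 := {| pmap := fun a (v : G a) => (fun p => True) : Sx L x a |}).
    { intros. reflexivity. }
    intro hg. destruct hg as [s p v].
    assert (E1 := Hu psi1). assert (E2 := Hu psi2).
    assert (forall a y, psi1 a y = psi2 a y) as E.
    { intros a y. rewrite E1, E2; auto.
      intros a0 u. apply functional_extensionality. intro q. simpl.
      apply propositional_extensionality. split; auto. intros _.
      exists (mkGerm a0 q u). apply rst_refl. }
    assert (H := f_equal (fun f => f p) (E s v)). simpl in H.
    rewrite H. exact I.
Qed.

Lemma sup_eq (L : Locale) (HL : is_interval L) (R : L -> Prop) (a : L) :
  (forall b, R b -> le b a) ->
  (forall c, lt c a -> exists t, R t /\ lt c t) -> sup R = a.
Proof.
  intros H1 H2. apply le_antisym. apply sup_least; auto.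
  apply NNPP; intro N.
  destruct (proj1 HL a (sup R)) as [k|k]; [contradiction|].
  assert (lt (sup R) a) as l. { split; auto. intro e; apply N; rewrite e; apply le_refl. }
  destruct (H2 _ l) as [t [Rt [lt1 lt2]]].
  apply lt2. apply le_antisym; auto. apply sup_ub; auto.
Qed.

Lemma lt_not_top (L : Locale) (c a : L) : lt c a -> c <> ltop L.
Proof.
  intros [h1 h2] e. subst. apply h2. apply le_antisym; auto. apply le_top.
Qed.

Lemma psi_inj (L : Locale) (HL : is_interval L) (GE GF : Presheaf L) (psi : PMap GE GF) :
  is_sheaf GE -> (forall x, x <> ltop L -> stalk_bij psi x) ->
  forall a (u v : GE a), psi a u = psi a v -> u = v.
Proof.
  intros Sh Hb a u v E.
  set (R := fun b => exists h : le b a, res GE h u = res GE h v).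
  assert (hR : forall b, R b -> le b a) by (intros b [h _]; exact h).
  assert (Rd : forall b c, R b -> le c b -> R c).
  { intros b c [h e] k. exists (le_trans _ _ _ _ k h).
    rewrite <- !(res_comp L GE c b a k h). rewrite e. reflexivity. }
  assert (Rs : sup R = a).
  { apply sup_eq; auto. intros c l.
    destruct (Hb c (lt_not_top L c a l)) as [Hi _].
    assert (germ_eq (mkGerm a l u) (mkGerm a l v)) as G.
    { apply Hi. unfold germ_map; simpl. rewrite E. apply rst_refl. }
    destruct (germ_eq_agree L HL GE c _ _ G) as (t & ht & h1 & h2 & e). simpl in *.
    exists t. split; auto. exists h1. rewrite e. apply res_pi. }
  destruct (Sh a R hR Rd Rs) as [Uq _]. apply Uq.
  intros b hb. destruct hb as [h e] eqn:Eq. rewrite (res_pi L GE b a (hR b _) h), (res_pi L GE b a (hR b _) h). exact e.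
Qed.

Lemma psi_surj (L : Locale) (HL : is_interval L) (GE GF : Presheaf L) (psi : PMap GE GF) :
  is_sheaf GE -> is_sheaf GF -> (forall x, x <> ltop L -> stalk_bij psi x) ->
  forall a (y : GF a), exists w, psi a w = y.
Proof.
  intros ShE ShF Hb a y.
  set (R := fun b => exists w : GE b, exists h : le b a, psi b w = res GF h y).
  assert (hR : forall b, R b -> le b a) by (intros b [w [h _]]; exact h).
  assert (Rd : forall b c, R b -> le c b -> R c).
  { intros b c [w [h e]] k. exists (res GE k w), (le_trans _ _ _ _ k h).
    rewrite pmap_nat, e. apply res_comp. }
  assert (Rs : sup R = a).
  { apply sup_eq; auto. intros c l.
    destruct (Hb c (lt_not_top L c a l)) as [_ Hs].
    destruct (Hs (mkGerm a l y)) as [g G].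
    destruct (germ_eq_agree L HL GF c _ _ G) as (t & ht & h1 & h2 & e). simpl in *.
    exists t. split; auto. exists (res GE h2 (g_v g)), h1. rewrite pmap_nat. auto. }
  set (fam := fun b (hb : R b) => proj1_sig (constructive_indefinite_description _ hb)).
  assert (famP : forall b hb, exists h : le b a, psi b (fam b hb) = res GF h y).
  { intros b hb. unfold fam. destruct (constructive_indefinite_description _ hb) as [w P]. exact P. }
  destruct (ShE a R hR Rd Rs) as [_ Gl].
  destruct (Gl fam) as [s Hs].
  { intros b c hb hc h. apply (psi_inj L HL GE GF psi ShE Hb).
    rewrite pmap_nat. destruct (famP b hb) as [h1 e1]. destruct (famP c hc) as [h2 e2].
    rewrite e1, e2. rewrite (res_comp L GF c b a h h1 h2). reflexivity. }
  exists s.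
  destruct (ShF a R hR Rd Rs) as [Uq _]. apply Uq.
  intros b hb. rewrite <- pmap_nat, Hs. destruct (famP b hb) as [h1 e1]. rewrite e1. apply res_pi.
Qed.

Lemma psi_iso (L : Locale) (HL : is_interval L) (GE GF : Presheaf L) (psi : PMap GE GF) :
  is_sheaf GE -> is_sheaf GF -> (forall x, x <> ltop L -> stalk_bij psi x) -> is_iso psi.
Proof.
  intros ShE ShF Hb.
  pose proof (psi_inj L HL GE GF psi ShE Hb) as Inj.
  pose proof (psi_surj L HL GE GF psi ShE ShF Hb) as Sur.
  set (g := fun a y => proj1_sig (constructive_indefinite_description _ (Sur a y))).
  assert (gP : forall a y, psi a (g a y) = y).
  { intros a y. unfold g. destruct (constructive_indefinite_description _ _). auto. }
  assert (gN : forall (a b : L) (h : le a b) (y : GF b), g a (res GF h y) = res GE h (g b y)).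
  { intros a b h y. apply Inj. rewrite gP, pmap_nat, gP. reflexivity. }
  exists {| pmap := g; pmap_nat := gN |}.
  simpl. split; [intros a x; apply Inj; rewrite gP; reflexivity | exact gP].
Qed.

Lemma gm_comp (L : Locale) (A B C D : Presheaf L) (f1 : PMap A B) (f2 : PMap B D)
  (g1 : PMap A C) (g2 : PMap C D) :
  (forall a y, f2 a (f1 a y) = g2 a (g1 a y)) ->
  forall x g, germ_map f2 x (germ_map f1 x g) = germ_map g2 x (germ_map g1 x g).
Proof. intros H x [s l v]. unfold germ_map; simpl. rewrite H. reflexivity. Qed.

Lemma gm_id (L : Locale) (A B : Presheaf L) (f1 : PMap A B) (f2 : PMap B A) :
  (forall a y, f2 a (f1 a y) = y) -> forall x g, germ_map f2 x (germ_map f1 x g) = g.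
Proof. intros H x [s l v]. unfold germ_map; simpl. rewrite H. reflexivity. Qed.

Ltac ge_sym := apply rst_sym.

Theorem lemma34 (L : Locale) (HL : is_interval L) :
  (forall (F G : Presheaf L) (eta : PMap F G),
     is_sheafification eta ->
     forall x : L, x <> ltop L -> stalk_bij eta x) /\
  (forall (E F GE GF : Presheaf L) (phi : PMap E F)
          (etaE : PMap E GE) (etaF : PMap F GF) (psi : PMap GE GF),
     is_sheafification etaE -> is_sheafification etaF ->
     (forall a y, psi a (etaE a y) = etaF a (phi a y)) ->
     ((forall x : L, x <> ltop L -> stalk_bij phi x) <-> is_iso psi)).
Proof.
  split.
  { intros F G eta H x _. apply part1; auto. }
  intros E F GE GF phi etaE etaF psi HE HF Hc.
  pose proof (gm_comp L E GE F GF etaE psi phi etaF Hc) as GC.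
  split.
  - intro Hb. apply psi_iso; auto. apply (proj1 HE). apply (proj1 HF).
    intros x nx.
    destruct (part1 L HL E GE etaE HE x) as [iE sE].
    destruct (part1 L HL F GF etaF HF x) as [iF sF].
    destruct (Hb x nx) as [iP sP].
    split.
    + intros a1 a2 H.
      destruct (sE a1) as [e1 H1]. destruct (sE a2) as [e2 H2].
      eapply rst_trans; [exact H1|]. eapply rst_trans; [|apply rst_sym; exact H2].
      apply germ_eq_map. apply iP. apply iF. rewrite <- !GC.
      eapply rst_trans; [apply rst_sym, germ_eq_map, H1|].
      eapply rst_trans; [exact H|]. apply germ_eq_map, H2.
    + intro h. destruct (sF h) as [f Hf]. destruct (sP f) as [e He].
      exists (germ_map etaE x e). rewrite GC.
      eapply rst_trans; [exact Hf|]. apply germ_eq_map, He.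
  - intros [gi [Hgi1 Hgi2]] x nx.
    pose proof (gm_id L GE GF psi gi Hgi1) as I1.
    pose proof (gm_id L GF GE gi psi Hgi2) as I2.
    destruct (part1 L HL E GE etaE HE x) as [iE sE].
    destruct (part1 L HL F GF etaF HF x) as [iF sF].
    split.
    + intros e1 e2 H. apply iE.
      rewrite <- (I1 x (germ_map etaE x e1)), <- (I1 x (germ_map etaE x e2)).
      apply germ_eq_map. rewrite !GC. apply germ_eq_map, H.
    + intro h. destruct (sE (germ_map gi x (germ_map etaF x h))) as [k Hk].
      exists k. apply iF. rewrite <- GC.
      rewrite <- (I2 x (germ_map etaF x h)). apply germ_eq_map, Hk.
Qed.
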